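(* Let $\rho_{ABC}=\sum_bp_B(b)|b\rangle\langle b|_B\otimes\rho^{|b}_{AC}$ be a state classical on $B$, and $\alpha\in(1,\infty)$. Then $$H_\alpha(A|B^{\uparrow}C^{\downarrow})_\rho=\sup_{q_B\in\Delta(B)}-D_\alpha(\rho_{ABC}\|I_A\otimes\sigma_{BC}),$$ where $\sigma_{BC}=\sum_bq_B(b)|b\rangle\langle b|\otimes\rho^{|b}_C$ and $\rho^{|b}_C=\mathrm{tr}_A[\rho^{|b}_{AC}]$.
   Context: Finite-dimensional spaces, $\log$ base 2. For $\alpha>1$, $D_\alpha(\rho\|\sigma)=\frac{1}{\alpha-1}\log\big(\mathrm{tr}[(\sigma^{\frac{1-\alpha}{2\alpha}}\rho\sigma^{\frac{1-\alpha}{2\alpha}})^\alpha]/\mathrm{tr}\rho\big)$ if $\mathrm{supp}\rho\subseteq\mathrm{supp}\sigma$, else $+\infty$. $H^{\downarrow}_\alpha(A|C)_\rho=-D_\alpha(\rho_{AC}\|I_A\otimes\rho_C)$. Partially optimized conditional Rényi entropy: $H_\alpha(A|B^{\uparrow}C^{\downarrow})_\rho:=\frac{\alpha}{1-\alpha}\log\big(\sum_bp_B(b)2^{\frac{1-\alpha}{\alpha}H^{\downarrow}_\alpha(A|C)_{\rho^{|b}}}\big)$. $\Delta(B)$ is the set of probability distributions on the alphabet of $B$. *)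

(* Defs.v *)
From HB Require Import structures.
From mathcomp Require Import all_boot all_order all_algebra.
From mathcomp Require Import sesquilinear spectral.
From mathcomp Require Import complex.
From mathcomp Require Import classical_sets boolp reals ereal exp.

Set Implicit Arguments.
Unset Strict Implicit.
Unset Printing Implicit Defensive.

Import Order.TTheory GRing.Theory Num.Theory.
Local Open Scope ring_scope.

(* Operators on the Hilbert space with orthonormal basis indexed by a finite *)
(* type T: square complex matrices of size #|T|.  Basis vectors are indexed  *)
(* via enum_rank / enum_val.                                                 *)
Definition Op (R : realType) (T : finType) := 'M[R[i]]_#|T|.

Definition ent (R : realType) (T : finType) (X : Op R T) (x y : T) : R[i] :=
  X (enum_rank x) (enum_rank y).

Definition opE (R : realType) (T : finType) (f : T -> T -> R[i]) : Op R T :=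
  \matrix_(i, j) f (enum_val i) (enum_val j).

Definition psdmx (R : realType) n (X : 'M[R[i]]_n) : Prop :=
  X \is hermsymmx /\
  forall u : 'rV[R[i]]_n, 0 <= (u *m X *m (map_mx Num.Def.conjC u^T)) 0 0.

Definition density (R : realType) (T : finType) (X : Op R T) : Prop :=
  psdmx X /\ \tr X = 1.

Definition prob_dist (R : realType) (B : finType) (q : B -> R) : Prop :=
  (forall b, 0 <= q b) /\ \sum_b q b = 1.

(* real power X^s of a Hermitian matrix via its spectral decomposition
   X = U^-1 diag(lambda) U; eigenvalue 0 is sent to 0 when s <> 0
   (powR 0 s = 0 for s <> 0), i.e. negative powers are taken on the support
   (generalized inverse), as is standard. *)
Definition mxpowR (R : realType) n (X : 'M[R[i]]_n) (s : R) : 'M[R[i]]_n :=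
  invmx (spectralmx X) *m
  diag_mx (map_mx (fun z : R[i] => ((powR (complex.Re z) s)%:C)%C)
                  (spectral_diag X)) *m spectralmx X.

(* supp X subseteq supp Y  (supports = column spaces / ranges) *)
Definition supp_sub (R : realType) n (X Y : 'M[R[i]]_n) : bool :=
  (X^T <= Y^T)%MS.

Definition log2 (R : realType) (x : R) : R := ln x / ln 2.

Definition Dalpha (R : realType) (T : finType) (a : R) (rho sig : Op R T)
  : \bar R :=
  if supp_sub rho sig then
    let S := mxpowR sig ((1 - a) / (2 * a)) in
    ((a - 1)^-1 *
     log2 (complex.Re (\tr (mxpowR (S *m rho *m S) a)) /
           complex.Re (\tr rho)))%:E
  else +oo%E.

Definition tensI (R : realType) (X T : finType) (Y : Op R T) : Op R (X * T)%type :=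
  opE (fun u v : (X * T)%type => (u.1 == v.1)%:R * ent Y u.2 v.2).

Definition ptr1 (R : realType) (X T : finType) (Y : Op R (X * T)%type) : Op R T :=
  opE (fun t t' : T => \sum_(x : X) ent Y (x, t) (x, t')).

Definition Hdown (R : realType) (A C : finType) (a : R) (rho : Op R (A * C)%type)
  : \bar R :=
  (- Dalpha a rho (tensI A (ptr1 rho)))%E.

Definition pow2e (R : realType) (x : \bar R) : \bar R :=
  expeR (x * (ln (2 : R))%:E)%E.
Definition log2e (R : realType) (x : \bar R) : \bar R :=
  (lne x * ((ln (2 : R))^-1)%:E)%E.

(* partially optimized conditional Renyi entropy H_alpha(A|B^up C^down),
   for rho_ABC = sum_b p(b) |b><b| (x) rho^{|b}_AC *)
Definition Hpo (R : realType) (A B C : finType) (a : R) (p : B -> R)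
  (rhob : B -> Op R (A * C)%type) : \bar R :=
  ((a / (1 - a))%:E *
   log2e (\sum_(b : B) (p b)%:E * pow2e (((1 - a) / a)%:E * Hdown a (rhob b))))%E.

Definition rhoABC (R : realType) (A B C : finType) (p : B -> R)
  (rhob : B -> Op R (A * C)%type) : Op R (A * (B * C))%type :=
  opE (fun u v : (A * (B * C))%type =>
         (u.2.1 == v.2.1)%:R * ((p u.2.1)%:C)%C *
         ent (rhob u.2.1) (u.1, u.2.2) (v.1, v.2.2)).

Definition sigmaBC (R : realType) (A B C : finType) (q : B -> R)
  (rhob : B -> Op R (A * C)%type) : Op R (B * C)%type :=
  opE (fun u v : (B * C)%type =>
         (u.1 == v.1)%:R * ((q u.1)%:C)%C * ent (ptr1 (rhob u.1)) u.2 v.2).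

(* Main.v *)
Require Import Defs.
From HB Require Import structures.
From mathcomp Require Import all_boot all_order all_algebra.
From mathcomp Require Import sesquilinear spectral.
From mathcomp Require Import complex.
From mathcomp Require Import classical_sets boolp reals ereal exp.
From mathcomp Require Import ring lra.

Set Implicit Arguments.
Unset Strict Implicit.
Unset Printing Implicit Defensive.

Import Order.TTheory GRing.Theory Num.Theory.
Local Open Scope ring_scope.

Section Part1.


Definition adj (R : realType) n (X : 'M[R[i]]_n) : 'M[R[i]]_n := map_mx Num.Def.conjC X^T.
Definition dg (R : realType) (T : finType) (e : T -> R[i]) : Op R T :=
  opE (fun x y => (x == y)%:R * e x).

Section Basics.
Variable R : realType.
Variable T : finType.
Implicit Types X Y : Op R T.

Lemma entE (f : T -> T -> R[i]) x y : ent (opE f) x y = f x y.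
Proof. by rewrite /ent /opE mxE !enum_rankK. Qed.

Lemma op_ext X Y : (forall x y, ent X x y = ent Y x y) -> X = Y.
Proof.
move=> H; apply/matrixP => i j.
by have := H (enum_val i) (enum_val j); rewrite /ent !enum_valK.
Qed.

Lemma sum_enum (F : 'I_#|T| -> R[i]) : \sum_i F i = \sum_x F (enum_rank x).
Proof.
rewrite (reindex (@enum_rank T)) //; exists (@enum_val T T) => x _.
  exact: enum_rankK. exact: enum_valK.
Qed.

Lemma entM X Y x z : ent (X *m Y) x z = \sum_y ent X x y * ent Y y z.
Proof. by rewrite /ent mxE sum_enum. Qed.

Lemma ent_tr X : \tr X = \sum_x ent X x x.
Proof. by rewrite /mxtrace sum_enum. Qed.

Lemma ent_adj X x y : ent (adj X) x y = (ent X y x)^*.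
Proof. by rewrite /ent /adj !mxE. Qed.

Lemma ent1 x y : ent (1%:M : Op R T) x y = (x == y)%:R.
Proof. by rewrite /ent mxE (inj_eq (@enum_rank_inj T)). Qed.

Lemma entD X Y x y : ent (X + Y) x y = ent X x y + ent Y x y.
Proof. by rewrite /ent mxE. Qed.

Lemma entZ c X x y : ent (c *: X) x y = c * ent X x y.
Proof. by rewrite /ent mxE. Qed.

Lemma ent0 x y : ent (0 : Op R T) x y = 0.
Proof. by rewrite /ent mxE. Qed.

Lemma diag_dg (v : 'rV[R[i]]_#|T|) : diag_mx v = dg (fun x : T => v 0 (enum_rank x)).
Proof.
apply: op_ext => x y; rewrite entE /ent mxE (inj_eq (@enum_rank_inj T)).
by case: eqP => [->|]; rewrite ?mulr1n ?mulr0n ?mul1r ?mul0r.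
Qed.

Lemma ent_dg (e : T -> R[i]) x y : ent (dg e) x y = (x == y)%:R * e x.
Proof. exact: entE. Qed.

Lemma dgM_l (e : T -> R[i]) X x y : ent (dg e *m X) x y = e x * ent X x y.
Proof.
rewrite entM (bigD1 x) //= big1 ?addr0 => [|z /negbTE zx]; rewrite ent_dg.
  by rewrite eqxx mul1r.
by rewrite eq_sym zx mul0r mul0r.
Qed.

Lemma dgM_r (e : T -> R[i]) X x y : ent (X *m dg e) x y = ent X x y * e y.
Proof.
rewrite entM (bigD1 y) //= big1 ?addr0 => [|z /negbTE zx]; rewrite ent_dg.
  by rewrite eqxx mul1r.
by rewrite zx mul0r mulr0.
Qed.

Lemma tr_dg (e : T -> R[i]) : \tr (dg e) = \sum_x e x.
Proof. by rewrite ent_tr; apply: eq_bigr => x _; rewrite ent_dg eqxx mul1r. Qed.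

End Basics.

End Part1.

Section Part2.


Section Uniq.
Variable R : realType.
Variable n : nat.

Lemma diag_comm (M : 'M[R[i]]_n) (d v : 'rV[R[i]]_n) (g : R[i] -> R[i]) :
  diag_mx d *m M = M *m diag_mx v ->
  diag_mx (map_mx g d) *m M = M *m diag_mx (map_mx g v).
Proof.
move=> HM; apply/matrixP => i j; have := congr1 (fun A : 'M[R[i]]_n => A i j) HM.
rewrite !mul_diag_mx !mul_mx_diag !mxE /=.
have [->|Mij] := eqVneq (M i j) 0; first by rewrite !mulr0 !mul0r.
move=> H; have -> : d 0 i = v 0 j by apply: (mulIf Mij); rewrite H mulrC.
by rewrite mulrC.
Qed.

Lemma spec_uniq (X W : 'M[R[i]]_n) (v : 'rV[R[i]]_n) (g : R[i] -> R[i]) :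
  W \is unitarymx -> X = invmx W *m diag_mx v *m W ->
  invmx (spectralmx X) *m diag_mx (map_mx g (spectral_diag X)) *m spectralmx X
  = invmx W *m diag_mx (map_mx g v) *m W.
Proof.
move=> Wu HX.
have Xn : X \is normalmx by apply/orthomx_spectral_subproof; exists (W, v).
have HP := orthomx_spectralP Xn.
set P := spectralmx X in HP *; set d := spectral_diag X in HP *.
have Pu : P \in unitmx by apply: spectral_unit.
have Wi : W \in unitmx by apply: unitarymx_unit.
set M := P *m invmx W.
have HM : diag_mx d *m M = M *m diag_mx v.
  have := congr1 (fun Y => P *m Y *m invmx W) HX.
  rewrite {1}HP /M !mulmxA mulmxV // mul1mx -!mulmxA mulmxV // mulmx1.
  by rewrite !mulmxA.
have HM' : diag_mx (map_mx g d) *m M = M *m diag_mx (map_mx g v).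
  exact: diag_comm.
have E1 : diag_mx (map_mx g d) *m P = M *m diag_mx (map_mx g v) *m W.
  by rewrite -HM' -mulmxA /M mulmxKV.
have E2 : invmx P *m M = invmx W by rewrite /M mulKmx.
by rewrite -mulmxA E1 !mulmxA mulVmx ?mul1mx.
Qed.

Definition gpow (R' : realType) (s : R') (z : R'[i]) : R'[i] := ((powR (complex.Re z) s)%:C)%C.

Lemma mxpowR_dec (X W : 'M[R[i]]_n) (v : 'rV[R[i]]_n) s :
  W \is unitarymx -> X = invmx W *m diag_mx v *m W ->
  mxpowR X s = invmx W *m diag_mx (map_mx (gpow s) v) *m W.
Proof. exact: spec_uniq. Qed.

End Uniq.

End Part2.

Section Part3.


Section Gen.
Variable R : realType.
Variable T : finType.
Implicit Types X Y W : Op R T.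

Lemma adjK X : adj (adj X) = X.
Proof. by apply/matrixP => i j; rewrite !mxE conjCK. Qed.

Lemma adjM X Y : adj (X *m Y) = adj Y *m adj X.
Proof. by rewrite /adj trmx_mul map_mxM. Qed.

Lemma adj_dg (e : T -> R[i]) : adj (dg e) = dg (fun x => (e x)^*).
Proof.
apply: op_ext => x y; rewrite ent_adj !ent_dg eq_sym.
by case: eqP => [->|]; rewrite ?mul1r ?mul0r ?conjC0.
Qed.

Lemma adj1 : adj (1%:M : Op R T) = 1%:M.
Proof. by rewrite /adj trmx1 map_mx1. Qed.

Lemma unitary_r W : W \is unitarymx -> W *m adj W = 1%:M.
Proof. by move/unitarymxP. Qed.

Lemma unitary_l W : W \is unitarymx -> adj W *m W = 1%:M.
Proof. by move/unitarymxP/mulmx1C. Qed.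

Lemma unitaryP W : W *m adj W = 1%:M -> W \is unitarymx.
Proof. by move=> H; apply/unitarymxP. Qed.

Lemma dg_row (e : T -> R[i]) :
  dg e = diag_mx (\row_j e (enum_val j)).
Proof. by rewrite diag_dg; congr dg; apply: boolp.funext => x; rewrite mxE enum_rankK. Qed.

Lemma mxpowR_op X W (e : T -> R[i]) s :
  W \is unitarymx -> X = adj W *m dg e *m W ->
  mxpowR X s = adj W *m dg (fun x => gpow s (e x)) *m W.
Proof.
move=> Wu HX.
pose v : 'rV[R[i]]_#|T| := \row_j e (enum_val j).
have HX' : X = invmx W *m diag_mx v *m W.
  rewrite (invmx_unitary Wu) HX dg_row; reflexivity.
have E := mxpowR_dec s Wu HX'.
rewrite E (invmx_unitary Wu).
congr (_ *m _ *m _); rewrite dg_row; congr diag_mx.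
by apply/matrixP => i j; rewrite !mxE.
Qed.

Lemma tr_dec W D : W \is unitarymx -> \tr (adj W *m D *m W) = \tr D.
Proof. by move=> Wu; rewrite mxtrace_mulC mulmxA unitary_r // mul1mx. Qed.

Definition spL X : T -> R[i] := fun x => spectral_diag X 0 (enum_rank x).

Lemma spec_op X : X \is normalmx -> X = adj (spectralmx X) *m dg (spL X) *m spectralmx X.
Proof.
move=> Hn; have HX := orthomx_spectralP Hn.
rewrite /spL -diag_dg.
rewrite /adj -(invmx_unitary (spectral_unitarymx X)).
exact: HX.
Qed.

Definition qf X (f : T -> R[i]) := \sum_x \sum_y f x * ent X x y * (f y)^*.

Lemma entMMadj W X k :
  ent (W *m X *m adj W) k k = qf X (fun x => ent W k x).
Proof.
rewrite entM /qf; under eq_bigr => y _ do rewrite entM big_distrl /=.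
rewrite exchange_big /=; apply: eq_bigr => x _; apply: eq_bigr => y _.
by rewrite ent_adj.
Qed.

Lemma psd_qf X : psdmx X -> forall f, 0 <= qf X f.
Proof.
move=> [_ H] f; have := H (\row_j f (enum_val j)).
congr (0 <= _); rewrite /qf exchange_big /= mxE sum_enum; apply: eq_bigr => y _.
rewrite !mxE sum_enum big_distrl /=; apply: eq_bigr => x _.
by rewrite !mxE !enum_rankK /ent.
Qed.

Lemma herm_adj X : X \is hermsymmx -> adj X = X.
Proof. by move/is_hermitianmxP; rewrite expr0 scale1r => {2}->. Qed.

Lemma adj_herm X : adj X = X -> X \is hermsymmx.
Proof. by move=> H; apply/is_hermitianmxP; rewrite expr0 scale1r; rewrite -{1}H. Qed.

Lemma psd_herm X : psdmx X -> adj X = X.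
Proof. by case=> H _; apply: herm_adj. Qed.

Lemma psd_normal X : psdmx X -> X \is normalmx.
Proof. by case=> H _; apply: hermitian_normalmx. Qed.

Lemma psd_of X : adj X = X -> (forall f, 0 <= qf X f) -> psdmx X.
Proof.
move=> H1 H2; split; first exact: adj_herm.
move=> u; have := H2 (fun x => u 0 (enum_rank x)).
congr (0 <= _); rewrite /qf exchange_big /= mxE sum_enum; apply: eq_bigr => y _.
rewrite !mxE sum_enum big_distrl /=; apply: eq_bigr => x _.
by rewrite /ent.
Qed.

Lemma spL_ge0 X : psdmx X -> forall k, 0 <= spL X k.
Proof.
move=> Hp k; have Hn := psd_normal Hp.
have HX := spec_op Hn; set V := spectralmx X in HX.
have Vu : V \is unitarymx by apply: spectral_unitarymx.
have E : V *m X *m adj V = dg (spL X).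
  by rewrite {1}HX !mulmxA unitary_r // mul1mx -mulmxA unitary_r // mulmx1.
have := entMMadj V X k; rewrite E ent_dg eqxx mul1r => ->.
exact: psd_qf.
Qed.

End Gen.

End Part3.

Section Part4.


Section Ker.
Variable R : realType.
Variable T : finType.
Implicit Types X Y W : Op R T.

Lemma qf_split X f g :
  qf X (fun x => f x + g x) =
  qf X f + (\sum_x \sum_y f x * ent X x y * (g y)^*)
         + (\sum_x \sum_y g x * ent X x y * (f y)^*) + qf X g.
Proof.
rewrite /qf -!big_split /=; apply: eq_bigr => x _.
rewrite -!big_split /=; apply: eq_bigr => y _.
rewrite rmorphD /=; ring.
Qed.

Lemma sumD (F : T -> R[i]) y : \sum_x (x == y)%:R * F x = F y.
Proof.
rewrite (bigD1 y) //= eqxx mul1r big1 ?addr0 // => x /negbTE ->; by rewrite mul0r.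
Qed.

Lemma psd_ker X f : psdmx X -> qf X f = 0 ->
  forall y, \sum_x f x * ent X x y = 0.
Proof.
move=> Hp Hf y; set b := \sum_x f x * ent X x y.
have Hh := psd_herm Hp.
have Hent : forall x z, ent X z x = (ent X x z)^*.
  by move=> x z; rewrite -{1}Hh ent_adj.
set c := ent X y y.
have E3 : forall t, qf X (fun x => t * (x == y)%:R) = t * c * t^*.
  move=> t; rewrite /qf.
  transitivity (\sum_x (x == y)%:R * \sum_z (z == y)%:R * (t * ent X x z * t^*)).
    apply: eq_bigr => x _; rewrite big_distrr /=; apply: eq_bigr => z _.
    by rewrite rmorphM /= rmorph_nat; ring.
  by rewrite sumD sumD.
have c0 : 0 <= c.
  by have := psd_qf Hp (fun x => 1 * (x == y)%:R); rewrite E3 rmorph1 mulr1 mul1r.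
set r := (c + 1)^-1.
have r0 : 0 < r by rewrite invr_gt0 ltr_wpDl.
have rc : r^* = r by apply: geC0_conj; exact: ltW.
pose t := - r * b.
have := psd_qf Hp (fun x => f x + t * (x == y)%:R).
rewrite qf_split Hf add0r E3.
have E1 : \sum_x \sum_z f x * ent X x z * (t * (z == y)%:R)^* = t^* * b.
  transitivity (\sum_x \sum_z (z == y)%:R * (t^* * (f x * ent X x z))).
    apply: eq_bigr => x _; apply: eq_bigr => z _.
    by rewrite rmorphM /= rmorph_nat; ring.
  rewrite /b big_distrr /=; apply: eq_bigr => x _; exact: sumD.
have E2 : \sum_x \sum_z t * (x == y)%:R * ent X x z * (f z)^* = t * b^*.
  transitivity (\sum_x (x == y)%:R * \sum_z (t * ent X x z * (f z)^*)).
    apply: eq_bigr => x _; rewrite big_distrr /=; apply: eq_bigr => z _; ring.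
  rewrite sumD /b rmorph_sum big_distrr /=; apply: eq_bigr => z _.
  by rewrite rmorphM /= -Hent; ring.
rewrite E1 E2 /t rmorphM rmorphN /= rc.
set n := b * b^*.
have -> : (- r) * b^* * b + - r * b * b^* + - r * b * c * (- r * b^*) = r * n * (r * c - 2).
  by rewrite /n; ring.
have n0 : 0 <= n by apply: mul_conjC_ge0.
have rc1 : r * c - 2 < 0.
  rewrite subr_lt0 mulrC; apply: (le_lt_trans (y := 1)).
    by rewrite ler_pdivrMr ?ltr_wpDl // mul1r lerDl.
  by rewrite ltr1n.
have [n_eq0|n_gt0] := eqVneq n 0.
  by move=> _; apply/eqP; rewrite -mul_conjC_eq0; apply/eqP.
have rn : 0 < r * n by rewrite mulr_gt0 // lt_def n_gt0 n0.
by rewrite pmulr_rge0 // => H; have := lt_le_trans rc1 H; rewrite ltxx.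
Qed.

End Ker.

End Part4.

Section Part5.


Section Supp.
Variable R : realType.

Lemma submx_diag m n (A : 'M[R[i]]_(m, n)) (v : 'rV[R[i]]_n) :
  (A <= diag_mx v)%MS <-> (forall i k, v 0 k = 0 -> A i k = 0).
Proof.
split.
  move=> /submxP [D ->] i k vk; by rewrite mul_mx_diag mxE vk mulr0.
move=> H.
have -> : A = A *m diag_mx (map_mx (fun z => z^-1) v) *m diag_mx v.
  apply/matrixP => i k; rewrite mul_mx_diag mxE mul_mx_diag !mxE.
  have [vk|vk] := eqVneq (v 0 k) 0; first by rewrite H // vk !mulr0.
  by rewrite -mulrA mulVf // mulr1.
exact: submxMl.
Qed.

Variable T : finType.
Implicit Types X Y W : Op R T.

Lemma supp_dec X W (e : T -> R[i]) : W \is unitarymx ->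
  (supp_sub X (adj W *m dg e *m W) <-> forall k y, e k = 0 -> ent (W *m X) k y = 0).
Proof.
move=> Wu; rewrite /supp_sub !trmx_mul dg_row tr_diag_mx.
set Wc := (adj W)^T.
have H1 : W^T *m Wc = 1%:M by rewrite /Wc -trmx_mul unitary_l // trmx1.
have H2 : Wc *m W^T = 1%:M by rewrite /Wc -trmx_mul unitary_r // trmx1.
have Hf : row_full W^T by rewrite row_full_unit unitmx_tr unitarymx_unit.
have E : (X^T <= W^T *m diag_mx (\row_j e (enum_val j)) *m Wc)%MS <->
         (X^T *m W^T <= diag_mx (\row_j e (enum_val j)))%MS.
  split => H.
    have := submxMr W^T H; rewrite -[_ *m Wc *m W^T]mulmxA H2 mulmx1.
    by move/submx_trans; apply; apply: submxMl.
  rewrite -mulmxA (eqmxMfull _ Hf).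
  by have := submxMr Wc H; rewrite -mulmxA H1 mulmx1.
rewrite mulmxA E submx_diag; split.
  move=> H k y ek; have := H (enum_rank y) (enum_rank k).
  rewrite mxE enum_rankK => /(_ ek); rewrite -trmx_mul mxE => <-; by [].
move=> H i k; rewrite mxE => ek; rewrite -trmx_mul mxE.
have := H (enum_val k) (enum_val i) ek; by rewrite /ent !enum_valK.
Qed.

Lemma supp_psd X W (e : T -> R[i]) : psdmx X -> W \is unitarymx ->
  (forall k, e k = 0 -> ent (W *m X *m adj W) k k = 0) ->
  supp_sub X (adj W *m dg e *m W).
Proof.
move=> Hp Wu H; apply/(supp_dec _ _ Wu) => k y ek.
rewrite entM; apply: (psd_ker Hp).
by rewrite -entMMadj H.
Qed.

Lemma supp_fail X W (e : T -> R[i]) k : W \is unitarymx -> e k = 0 ->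
  ent (W *m X *m adj W) k k != 0 -> ~ supp_sub X (adj W *m dg e *m W).
Proof.
move=> Wu ek Hk /(supp_dec _ _ Wu) H; move: Hk; rewrite entM big1 ?eqxx //.
by move=> y _; rewrite H // mul0r.
Qed.

End Supp.

End Part5.

Section Part6.


Definition blk (R : realType) (A B C : finType) (F : B -> Op R (A * C)%type)
  : Op R (A * (B * C))%type :=
  opE (fun u v : (A * (B * C))%type =>
    (u.2.1 == v.2.1)%:R * ent (F u.2.1) (u.1, u.2.2) (v.1, v.2.2)).

Section Struct.
Variable R : realType.

Lemma sum_pair (A T : finType) (F : (A * T)%type -> R[i]) :
  \sum_u F u = \sum_a \sum_t F (a, t).
Proof. by rewrite pair_bigA; apply: eq_bigr => -[]. Qed.

Lemma sumD' (T : finType) (F : T -> R[i]) y : \sum_x (y == x)%:R * F x = F y.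
Proof. by rewrite -(sumD F y); apply: eq_bigr => x _; rewrite eq_sym. Qed.

Variables A B C T : finType.

Lemma ent_tensI (Y : Op R T) (u v : (A * T)%type) :
  ent (tensI A Y) u v = (u.1 == v.1)%:R * ent Y u.2 v.2.
Proof. exact: entE. Qed.

Lemma tensI_Ml (U : Op R T) (X : Op R (A * T)%type) u v :
  ent (tensI A U *m X) u v = \sum_s ent U u.2 s * ent X (u.1, s) v.
Proof.
rewrite entM sum_pair.
transitivity (\sum_a (u.1 == a)%:R * \sum_s ent U u.2 s * ent X (a, s) v).
  apply: eq_bigr => a _; rewrite big_distrr; apply: eq_bigr => s _.
  by rewrite ent_tensI /=; ring.
by rewrite sumD'.
Qed.

Lemma tensI_Mr (U : Op R T) (X : Op R (A * T)%type) u v :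
  ent (X *m tensI A U) u v = \sum_s ent X u (v.1, s) * ent U s v.2.
Proof.
rewrite entM sum_pair.
transitivity (\sum_a (v.1 == a)%:R * \sum_s ent X u (a, s) * ent U s v.2).
  apply: eq_bigr => a _; rewrite big_distrr; apply: eq_bigr => s _.
  by rewrite ent_tensI /= eq_sym; ring.
by rewrite sumD'.
Qed.

Lemma tensI_M (X Y : Op R T) : tensI A (X *m Y) = tensI A X *m tensI A Y.
Proof.
apply: op_ext => u w; rewrite tensI_Ml ent_tensI entM big_distrr /=.
by apply: eq_bigr => t _; rewrite ent_tensI /=; ring.
Qed.

Lemma tensI_adj (X : Op R T) : adj (tensI A X) = tensI A (adj X).
Proof.
apply: op_ext => u v; rewrite ent_adj !ent_tensI ent_adj rmorphM /= rmorph_nat.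
by rewrite eq_sym.
Qed.

Lemma tensI_1 : tensI A (1%:M : Op R T) = 1%:M.
Proof.
apply: op_ext => u v; rewrite ent_tensI !ent1.
case: u v => [a t] [a' t'] /=; rewrite xpair_eqE.
by case: (a == a'); case: (t == t'); rewrite ?mul1r ?mul0r.
Qed.

Lemma tensI_dg (e : T -> R[i]) : tensI A (dg e) = dg (fun u : (A * T)%type => e u.2).
Proof.
apply: op_ext => u v; rewrite ent_tensI !ent_dg.
case: u v => [a t] [a' t'] /=; rewrite xpair_eqE.
by case: (a == a'); case: (t == t'); rewrite ?mul1r ?mul0r.
Qed.

Lemma tensI_unitary (W : Op R T) : W \is unitarymx -> tensI A W \is unitarymx.
Proof. by move=> Wu; apply: unitaryP; rewrite tensI_adj -tensI_M unitary_r // tensI_1. Qed.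

Lemma ent_ptr1 (X : Op R (A * T)%type) t t' :
  ent (ptr1 X) t t' = \sum_a ent X (a, t) (a, t').
Proof. exact: entE. Qed.

Lemma ptr1_conj (U : Op R T) (X : Op R (A * T)%type) :
  ptr1 (tensI A U *m X *m adj (tensI A U)) = U *m ptr1 X *m adj U.
Proof.
apply: op_ext => t t'.
transitivity (\sum_a \sum_s' \sum_s ent U t s * ent X (a, s) (a, s') * ent (adj U) s' t').
  rewrite ent_ptr1; apply: eq_bigr => a _.
  rewrite tensI_adj tensI_Mr /=; apply: eq_bigr => s' _.
  by rewrite tensI_Ml big_distrl.
rewrite exchange_big entM /=; apply: eq_bigr => s' _.
rewrite entM big_distrl /= exchange_big /=; apply: eq_bigr => s _.
by rewrite ent_ptr1 big_distrr big_distrl /=.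
Qed.

Lemma adj_ptr1 (X : Op R (A * T)%type) : adj (ptr1 X) = ptr1 (adj X).
Proof.
apply: op_ext => t t'; rewrite ent_adj !ent_ptr1 rmorph_sum /=.
by apply: eq_bigr => a _; rewrite ent_adj.
Qed.

Lemma qf_ptr1 (X : Op R (A * T)%type) f :
  qf (ptr1 X) f = \sum_a qf X (fun u => (u.1 == a)%:R * f u.2).
Proof.
rewrite /qf.
transitivity (\sum_a \sum_t \sum_t' f t * ent X (a, t) (a, t') * (f t')^*).
  under eq_bigr => t _ do under eq_bigr => t' _ do rewrite ent_ptr1 big_distrr big_distrl /=.
  under eq_bigr => t _ do rewrite exchange_big /=.
  by rewrite exchange_big.
apply: eq_bigr => a _; rewrite sum_pair.
transitivity (\sum_a1 (a1 == a)%:R * \sum_t \sum_v f t * ent X (a1, t) v * ((v.1 == a)%:R * f v.2)^*).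
  rewrite sumD; apply: eq_bigr => t _; rewrite sum_pair.
  symmetry; transitivity (\sum_a2 (a2 == a)%:R * \sum_t' f t * ent X (a, t) (a2, t') * (f t')^*).
    apply: eq_bigr => a2 _; rewrite big_distrr; apply: eq_bigr => t' _.
    by rewrite /= rmorphM rmorph_nat; ring.
  by rewrite sumD.
apply: eq_bigr => a1 _; rewrite big_distrr; apply: eq_bigr => t _.
rewrite big_distrr; apply: eq_bigr => v _; rewrite /=; ring.
Qed.

Lemma psd_ptr1 (X : Op R (A * T)%type) : psdmx X -> psdmx (ptr1 X).
Proof.
move=> Hp; apply: psd_of; first by rewrite adj_ptr1 psd_herm.
by move=> f; rewrite qf_ptr1; apply: sumr_ge0 => a _; exact: psd_qf.
Qed.

Lemma tr_ptr1 (X : Op R (A * T)%type) : \tr (ptr1 X) = \tr X.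
Proof.
rewrite !ent_tr sum_pair exchange_big /=; apply: eq_bigr => t _.
by rewrite ent_ptr1.
Qed.

End Struct.

End Part6.

Section Part7.


Section Blk.
Variable R : realType.
Variables A B C : finType.
Implicit Types F G : B -> Op R (A * C)%type.

Lemma ent_blk F (u v : (A * (B * C))%type) :
  ent (blk F) u v = (u.2.1 == v.2.1)%:R * ent (F u.2.1) (u.1, u.2.2) (v.1, v.2.2).
Proof. exact: entE. Qed.

Lemma sum3 (H : (A * (B * C))%type -> R[i]) :
  \sum_u H u = \sum_b \sum_(s : (A * C)%type) H (s.1, (b, s.2)).
Proof.
rewrite sum_pair; under eq_bigr => a _ do rewrite sum_pair.
rewrite exchange_big /=; apply: eq_bigr => b _.
by rewrite sum_pair.
Qed.

Lemma blk_Ml F (X : Op R (A * (B * C))%type) u w :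
  ent (blk F *m X) u w =
  \sum_s ent (F u.2.1) (u.1, u.2.2) s * ent X (s.1, (u.2.1, s.2)) w.
Proof.
rewrite entM sum3.
transitivity (\sum_b (u.2.1 == b)%:R *
   \sum_(s : (A * C)%type) ent (F u.2.1) (u.1, u.2.2) s * ent X (s.1, (b, s.2)) w).
  apply: eq_bigr => b _; rewrite big_distrr; apply: eq_bigr => s _.
  rewrite ent_blk /=; case: eqP => [->|_]; last by rewrite !mul0r.
  by rewrite -surjective_pairing mulrA.
by rewrite sumD'.
Qed.

Lemma blk_M F G : blk F *m blk G = blk (fun b => F b *m G b).
Proof.
apply: op_ext => u w; rewrite blk_Ml ent_blk entM big_distrr /=.
apply: eq_bigr => s _; rewrite ent_blk /= -surjective_pairing; ring.
Qed.

Lemma blk_adj F : adj (blk F) = blk (fun b => adj (F b)).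
Proof.
apply: op_ext => u v; rewrite ent_adj !ent_blk ent_adj rmorphM /= rmorph_nat.
rewrite eq_sym; case: eqP => [->|_]; last by rewrite !mul0r.
by [].
Qed.

Lemma blk_1 : blk (fun _ : B => (1%:M : Op R (A * C)%type)) = 1%:M.
Proof.
apply: op_ext => -[a [b c]] [a' [b' c']]; rewrite ent_blk !ent1 /= !xpair_eqE.
by case: (a == a'); case: (b == b'); case: (c == c'); rewrite ?mul1r ?mul0r.
Qed.

Lemma blk_dg (e : B -> (A * C)%type -> R[i]) :
  blk (fun b => dg (e b)) = dg (fun u => e u.2.1 (u.1, u.2.2)).
Proof.
apply: op_ext => -[a [b c]] [a' [b' c']]; rewrite ent_blk !ent_dg /= !xpair_eqE.
by case: (a == a'); case: (b == b'); case: (c == c'); rewrite ?mul1r ?mul0r.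
Qed.

Lemma blk_unitary (W : B -> Op R (A * C)%type) : (forall b, W b \is unitarymx) -> blk W \is unitarymx.
Proof.
move=> Wu; apply: unitaryP; rewrite blk_adj blk_M -blk_1; congr blk.
by apply: boolp.funext => b; rewrite unitary_r.
Qed.

Lemma tr_blk F : \tr (blk F) = \sum_b \tr (F b).
Proof.
rewrite ent_tr sum3; apply: eq_bigr => b _; rewrite ent_tr.
by apply: eq_bigr => s _; rewrite ent_blk /= eqxx mul1r -surjective_pairing.
Qed.

End Blk.

End Part7.

Section Part8.

Local Open Scope complex_scope.
Local Open Scope ring_scope.

Local Notation RE := complex.Re.

Section Aux.
Variable R : realType.

Lemma ge0_C (z : R[i]) : 0 <= z -> z = (RE z)%:C.
Proof. by case: z => x y; rewrite lecE /= => /andP[/eqP -> _]. Qed.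

Lemma ge0_Re (z : R[i]) : 0 <= z -> 0 <= RE z.
Proof. by case: z => x y; rewrite lecE /= => /andP[_ ->]. Qed.

Lemma gt0_Re (z : R[i]) : 0 <= z -> z != 0 -> 0 < RE z.
Proof.
move=> z0 zn; rewrite lt_def ge0_Re // andbT; apply: contra zn => /eqP r0.
by rewrite (ge0_C z0) r0.
Qed.

Lemma Re_sum (I : finType) (F : I -> R[i]) : RE (\sum_i F i) = \sum_i RE (F i).
Proof. exact: raddf_sum. Qed.

Lemma gpowM (s q : R) (z : R[i]) : 0 <= q -> 0 <= z ->
  gpow s (q%:C * z) = (powR q s)%:C * gpow s z.
Proof.
move=> q0 z0; rewrite /gpow (ge0_C z0) /=.
by rewrite !mul0r subr0 powRM ?ge0_Re // rmorphM.
Qed.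

Lemma gpow_ge0 s (z : R[i]) : 0 <= gpow s z.
Proof. by rewrite /gpow ler0c powR_ge0. Qed.

Lemma gpow_real s (z : R[i]) : (gpow s z)^* = gpow s z.
Proof. exact: geC0_conj (gpow_ge0 s z). Qed.

Variable T : finType.

Lemma qf_conj (Y X : Op R T) f :
  qf (Y *m X *m adj Y) f = qf X (fun y => \sum_x f x * ent Y x y).
Proof.
rewrite /qf.
transitivity (\sum_x \sum_z \sum_w \sum_y (f x * ent Y x y * ent X y w * (f z * ent Y z w)^*)).
  apply: eq_bigr => x _; apply: eq_bigr => z _.
  rewrite entM; rewrite ?big_distrl ?big_distrr ?big_distrl /=; apply: eq_bigr => w _.
  rewrite entM; rewrite ?big_distrl ?big_distrr ?big_distrl /=; apply: eq_bigr => y _.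
  by rewrite ent_adj rmorphM /=; ring.
transitivity (\sum_x \sum_z \sum_y \sum_w (f x * ent Y x y * ent X y w * (f z * ent Y z w)^*)).
  by apply: eq_bigr => x _; apply: eq_bigr => z _; exact: exchange_big.
transitivity (\sum_x \sum_y \sum_z \sum_w (f x * ent Y x y * ent X y w * (f z * ent Y z w)^*)).
  by apply: eq_bigr => x _; exact: exchange_big.
transitivity (\sum_y \sum_x \sum_z \sum_w (f x * ent Y x y * ent X y w * (f z * ent Y z w)^*)).
  exact: exchange_big.
transitivity (\sum_y \sum_x \sum_w \sum_z (f x * ent Y x y * ent X y w * (f z * ent Y z w)^*)).
  by apply: eq_bigr => y _; apply: eq_bigr => x _; exact: exchange_big.
transitivity (\sum_y \sum_w \sum_x \sum_z (f x * ent Y x y * ent X y w * (f z * ent Y z w)^*)).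
  by apply: eq_bigr => y _; exact: exchange_big.
apply: eq_bigr => y _; apply: eq_bigr => w _.
rewrite rmorph_sum big_distrl big_distrl /=; apply: eq_bigr => x _.
rewrite big_distrr /=; apply: eq_bigr => z _.
by rewrite rmorphM /=; ring.
Qed.

Lemma psd_conj (Y X : Op R T) : psdmx X -> psdmx (Y *m X *m adj Y).
Proof.
move=> Hp; apply: psd_of.
  by rewrite !adjM adjK psd_herm // mulmxA.
by move=> f; rewrite qf_conj; apply: psd_qf.
Qed.

End Aux.

End Part8.

Section Part9.

Local Open Scope complex_scope.
Local Open Scope ring_scope.
Local Notation RE := complex.Re.

Section Small.
Variable R : realType.
Variables A C : finType.
Variable H : Op R (A * C)%type.
Hypothesis Hd : density H.

Let Hp : psdmx H := Hd.1.
Definition rC := ptr1 H.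
Definition Us := spectralmx rC.
Definition ds := spL rC.
Definition Wt := tensI A Us.

Lemma rC_psd : psdmx rC.
Proof. exact: psd_ptr1. Qed.

Lemma Us_u : Us \is unitarymx.
Proof. exact: spectral_unitarymx. Qed.

Lemma Wt_u : Wt \is unitarymx.
Proof. exact/tensI_unitary/Us_u. Qed.

Lemma rC_dec : rC = adj Us *m dg ds *m Us.
Proof. exact/spec_op/psd_normal/rC_psd. Qed.

Lemma ds_ge0 c : 0 <= ds c.
Proof. exact/spL_ge0/rC_psd. Qed.

Lemma K_dec : tensI A rC = adj Wt *m dg (fun u => ds u.2) *m Wt.
Proof. by rewrite {1}rC_dec !tensI_M tensI_adj tensI_dg. Qed.

Definition Hr := Wt *m H *m adj Wt.

Lemma Hr_ge0 k : 0 <= ent Hr k k.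
Proof. by rewrite entMMadj; apply: psd_qf. Qed.

Lemma Hr_sum c : \sum_a ent Hr (a, c) (a, c) = ds c.
Proof.
rewrite -ent_ptr1 /Hr ptr1_conj -/rC {1}rC_dec.
rewrite !mulmxA unitary_r ?Us_u // mul1mx -mulmxA unitary_r ?Us_u // mulmx1.
by rewrite ent_dg eqxx mul1r.
Qed.

Lemma Hr0 k : ds k.2 = 0 -> ent Hr k k = 0.
Proof.
case: k => a c /= d0; have := Hr_sum c; rewrite d0 => /eqP.
rewrite psumr_eq0 => [/allP /(_ a) |]; last by move=> *; exact: Hr_ge0.
by rewrite mem_index_enum => /(_ isT) /eqP.
Qed.

Lemma row0 k y : ds k.2 = 0 -> ent (Wt *m H) k y = 0.
Proof.
move=> d0; rewrite entM; apply: (psd_ker Hp).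
by rewrite -entMMadj -/Hr Hr0.
Qed.

Lemma supp_small : supp_sub H (tensI A rC).
Proof.
rewrite K_dec; apply/(supp_dec _ _ Wt_u) => k y; exact: row0.
Qed.

Lemma Hr_tr : \sum_k ent Hr k k = 1.
Proof. by rewrite -ent_tr /Hr mxtrace_mulC mulmxA unitary_l ?Wt_u // mul1mx Hd.2. Qed.

End Small.

End Part9.

Section Part10.

Local Open Scope complex_scope.
Local Open Scope ring_scope.
Local Notation RE := complex.Re.

Section Small2.
Variable R : realType.
Variables A C : finType.
Variable H : Op R (A * C)%type.
Hypothesis Hd : density H.
Variables s a : R.

Definition Ss := mxpowR (tensI A (rC H)) s.

Lemma Ss_dec : Ss = adj (Wt H) *m dg (fun u => gpow s (ds H u.2)) *m Wt H.
Proof. exact: (mxpowR_op _ (Wt_u H) (K_dec Hd)). Qed.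

Lemma Ss_herm : adj Ss = Ss.
Proof.
rewrite Ss_dec !adjM adjK adj_dg mulmxA; congr (_ *m _ *m _); congr dg.
by apply: boolp.funext => u; rewrite gpow_real.
Qed.

Definition Ms := Ss *m H *m Ss.

Lemma Ms_psd : psdmx Ms.
Proof. by rewrite /Ms -{2}Ss_herm; apply: psd_conj; exact: Hd.1. Qed.

Definition Qs := \sum_k powR (RE (spL Ms k)) a.

Lemma Ms_dec : Ms = adj (spectralmx Ms) *m dg (spL Ms) *m spectralmx Ms.
Proof. exact/spec_op/psd_normal/Ms_psd. Qed.

Lemma Ms_pow_tr : \tr (mxpowR Ms a) = (Qs)%:C.
Proof.
rewrite (mxpowR_op _ (spectral_unitarymx _) Ms_dec) tr_dec ?spectral_unitarymx //.
by rewrite tr_dg /Qs rmorph_sum.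
Qed.

Lemma Ms_tr : \tr Ms = \sum_k gpow s (ds H k.2) * ent (Hr H) k k * gpow s (ds H k.2).
Proof.
rewrite /Ms Ss_dec.
have -> : adj (Wt H) *m dg (fun u => gpow s (ds H u.2)) *m Wt H *m H *m
   (adj (Wt H) *m dg (fun u => gpow s (ds H u.2)) *m Wt H) =
   adj (Wt H) *m (dg (fun u => gpow s (ds H u.2)) *m Hr H *m dg (fun u => gpow s (ds H u.2))) *m Wt H.
  by rewrite /Hr !mulmxA.
rewrite tr_dec ?Wt_u // ent_tr; apply: eq_bigr => k _.
by rewrite dgM_r dgM_l.
Qed.

Lemma Ms_tr_ne0 : \tr Ms != 0.
Proof.
rewrite Ms_tr psumr_neq0; last first.
  by move=> k _; rewrite mulr_ge0 ?mulr_ge0 ?gpow_ge0 ?(Hr_ge0 Hd).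
have : \sum_k ent (Hr H) k k != 0 by rewrite (Hr_tr Hd) oner_eq0.
rewrite psumr_neq0; last by move=> k _; exact: (Hr_ge0 Hd).
case/hasP => k _ /= Hk; apply/hasP; exists k; first exact: mem_index_enum.
have dk : ds H k.2 != 0 by apply/eqP => /(Hr0 Hd) E; rewrite E ltxx in Hk.
have pos : 0 < powR (RE (ds H k.2)) s.
  by apply/powR_gt0/gt0_Re => //; exact: (ds_ge0 Hd).
have g0 : 0 < gpow s (ds H k.2) by rewrite /gpow ltcE /= eqxx pos.
by rewrite !mulr_gt0.
Qed.

Lemma Qs_gt0 : 0 < Qs.
Proof.
have := Ms_tr_ne0; rewrite {1}Ms_dec tr_dec ?spectral_unitarymx // tr_dg.
rewrite psumr_neq0; last by move=> k _; apply/spL_ge0/Ms_psd.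
case/hasP => k _ /= Hk.
have pos : 0 < powR (RE (spL Ms k)) a.
  by apply/powR_gt0; move: Hk; rewrite ltcE /= => /andP[_ ->].
rewrite /Qs (bigD1 k) //=; apply: (lt_le_trans pos); rewrite lerDl.
by apply: sumr_ge0 => *; exact: powR_ge0.
Qed.


End Small2.

End Part10.

Section Part11.

Local Open Scope complex_scope.
Local Open Scope ring_scope.
Local Notation RE := complex.Re.

Lemma Hdown_val (R : realType) (A C : finType) (H : Op R (A * C)%type) (a : R) :
  density H ->
  Hdown a H = (- ((a - 1)^-1 * log2 (Qs H ((1 - a) / (2 * a)) a)))%:E.
Proof.
move=> Hd; rewrite /Hdown /Dalpha (supp_small Hd) /=.
have := Ms_pow_tr Hd ((1 - a) / (2 * a)) a; rewrite /Ms /Ss /rC => ->.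
by rewrite (proj2 Hd) /= divr1.
Qed.

Section Gen2.
Variable R : realType.
Variable T : finType.

Lemma scale_dg (c : R[i]) (e : T -> R[i]) : c *: dg e = dg (fun x => c * e x).
Proof. by apply: op_ext => x y; rewrite entZ !ent_dg; ring. Qed.

Lemma scale_dec (c : R[i]) (W : Op R T) (e : T -> R[i]) :
  c *: (adj W *m dg e *m W) = adj W *m dg (fun x => c * e x) *m W.
Proof. by rewrite scalemxAl scalemxAr scale_dg. Qed.

End Gen2.

Lemma blk_dec (R : realType) (A B C : finType) (c : B -> R[i])
  (W : B -> Op R (A * C)%type) (e : B -> (A * C)%type -> R[i]) :
  blk (fun b => c b *: (adj (W b) *m dg (e b) *m W b)) =
  adj (blk W) *m dg (fun u => c u.2.1 * e u.2.1 (u.1, u.2.2)) *m blk W.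
Proof.
have -> : (fun b => c b *: (adj (W b) *m dg (e b) *m W b)) =
          (fun b => adj (W b) *m dg (fun x => c b * e b x) *m W b).
  by apply: boolp.funext => b; rewrite scale_dec.
by rewrite blk_adj -(blk_dg (fun b x => c b * e b x)) !blk_M.
Qed.

End Part11.

Section Part12.

Local Open Scope complex_scope.
Local Open Scope ring_scope.
Local Notation RE := complex.Re.

Section Big.
Variable R : realType.
Variables A B C : finType.
Variables p q : B -> R.
Variable rhob : B -> Op R (A * C)%type.
Hypothesis Hp : prob_dist p.
Hypothesis Hq : prob_dist q.
Hypothesis Hd : forall b, density (rhob b).
Variable s : R.

Lemma rho_blk : rhoABC p rhob = blk (fun b => (p b)%:C *: rhob b).
Proof. by apply: op_ext => u v; rewrite ent_blk entZ entE mulrA. Qed.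

Lemma sig_blk : tensI A (sigmaBC q rhob) =
  blk (fun b => (q b)%:C *: tensI A (rC (rhob b))).
Proof.
apply: op_ext => u v; rewrite ent_blk entZ ent_tensI entE ent_tensI /=.
by rewrite /rC; ring.
Qed.

Definition WB := blk (fun b => Wt (rhob b)).

Lemma WB_u : WB \is unitarymx.
Proof. by apply: blk_unitary => b; exact: Wt_u. Qed.

Definition EB (u : (A * (B * C))%type) : R[i] := (q u.2.1)%:C * ds (rhob u.2.1) u.2.2.

Lemma sig_dec : tensI A (sigmaBC q rhob) = adj WB *m dg EB *m WB.
Proof.
rewrite sig_blk.
have -> : (fun b => (q b)%:C *: tensI A (rC (rhob b))) =
   (fun b => (q b)%:C *: (adj (Wt (rhob b)) *m dg (fun x => ds (rhob b) x.2) *m Wt (rhob b))).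
  by apply: boolp.funext => b; rewrite (K_dec (Hd b)).
by rewrite blk_dec.
Qed.

Definition SB := mxpowR (tensI A (sigmaBC q rhob)) s.

Lemma SB_blk : SB = blk (fun b => (powR (q b) s)%:C *: Ss (rhob b) s).
Proof.
rewrite /SB (mxpowR_op _ WB_u sig_dec).
have -> : (fun b => (powR (q b) s)%:C *: Ss (rhob b) s) =
  (fun b => (powR (q b) s)%:C *: (adj (Wt (rhob b)) *m
       dg (fun u => gpow s (ds (rhob b) u.2)) *m Wt (rhob b))).
  by apply: boolp.funext => b; rewrite (Ss_dec (Hd b)).
rewrite blk_dec; congr (_ *m _ *m _); congr dg; apply: boolp.funext => u.
by rewrite /EB gpowM ?(proj1 Hq) ?(ds_ge0 (Hd _)).
Qed.

End Big.

End Part12.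

Section Part13.

Local Open Scope complex_scope.
Local Open Scope ring_scope.
Local Notation RE := complex.Re.

Lemma Re_mulC (R : realType) (c : R) (z : R[i]) : RE (c%:C * z) = c * RE z.
Proof. by case: z => x y; rewrite /= mul0r subr0. Qed.

Section Big2.
Variable R : realType.
Variables A B C : finType.
Variables p q : B -> R.
Variable rhob : B -> Op R (A * C)%type.
Hypothesis Hp : prob_dist p.
Hypothesis Hq : prob_dist q.
Hypothesis Hd : forall b, density (rhob b).
Variables s a : R.

Definition cB b := powR (q b) s * p b * powR (q b) s.

Lemma cB_ge0 b : 0 <= cB b.
Proof. by rewrite /cB !mulr_ge0 ?powR_ge0 ?(proj1 Hp). Qed.

Lemma MB_blk : SB q rhob s *m rhoABC p rhob *m SB q rhob s =
  blk (fun b => (cB b)%:C *: Ms (rhob b) s).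
Proof.
rewrite (SB_blk Hq Hd) rho_blk !blk_M; congr blk; apply: boolp.funext => b.
rewrite /Ms; do 3! rewrite ?(=^~scalemxAl) ?(=^~scalemxAr); rewrite !scalerA /cB !rmorphM /=.
by congr (_ *: _); ring.
Qed.

Definition VB := blk (fun b => spectralmx (Ms (rhob b) s)).

Lemma MB_dec : SB q rhob s *m rhoABC p rhob *m SB q rhob s =
  adj VB *m dg (fun u => (cB u.2.1)%:C * spL (Ms (rhob u.2.1) s) (u.1, u.2.2)) *m VB.
Proof.
rewrite MB_blk.
have -> : (fun b => (cB b)%:C *: Ms (rhob b) s) =
  (fun b => (cB b)%:C *: (adj (spectralmx (Ms (rhob b) s)) *m dg (spL (Ms (rhob b) s))
        *m spectralmx (Ms (rhob b) s))).
  by apply: boolp.funext => b; rewrite -(Ms_dec (Hd b)).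
by rewrite blk_dec.
Qed.

Lemma VB_u : VB \is unitarymx.
Proof. by apply: blk_unitary => b; exact: spectral_unitarymx. Qed.

Lemma MB_pow_tr : RE (\tr (mxpowR (SB q rhob s *m rhoABC p rhob *m SB q rhob s) a)) =
  \sum_b powR (cB b) a * Qs (rhob b) s a.
Proof.
rewrite (mxpowR_op _ VB_u MB_dec) tr_dec ?VB_u // tr_dg sum3 Re_sum.
apply: eq_bigr => b _; rewrite /Qs big_distrr Re_sum /=; apply: eq_bigr => k _.
rewrite -surjective_pairing Re_mulC powRM ?cB_ge0 //.
exact/ge0_Re/(spL_ge0 (Ms_psd (Hd b) s)).
Qed.

Lemma rho_tr : RE (\tr (rhoABC p rhob)) = 1.
Proof.
rewrite rho_blk tr_blk Re_sum -(proj2 Hp); apply: eq_bigr => b _.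
by rewrite mxtraceZ (proj2 (Hd b)) mulr1.
Qed.

End Big2.

End Part13.

Section Part14.

Local Open Scope complex_scope.
Local Open Scope ring_scope.
Local Notation RE := complex.Re.

Section Big3.
Variable R : realType.
Variables A B C : finType.
Variables p q : B -> R.
Variable rhob : B -> Op R (A * C)%type.
Hypothesis Hp : prob_dist p.
Hypothesis Hq : prob_dist q.
Hypothesis Hd : forall b, density (rhob b).

Lemma entWBrho k y : ent (WB rhob *m rhoABC p rhob) k y =
  (k.2.1 == y.2.1)%:R * ((p k.2.1)%:C * ent (Wt (rhob k.2.1) *m rhob k.2.1) (k.1, k.2.2) (y.1, y.2.2)).
Proof. by rewrite rho_blk /WB blk_M ent_blk -scalemxAr entZ. Qed.

Lemma supp_big : supp_sub (rhoABC p rhob) (tensI A (sigmaBC q rhob)) <->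
  (forall b, p b != 0 -> q b != 0).
Proof.
rewrite (sig_dec q Hd) (supp_dec _ _ (WB_u rhob)); split.
  move=> H b pb; apply/negP => /eqP qb.
  have W0 : Wt (rhob b) *m rhob b = 0.
    apply: op_ext => k' y'; rewrite ent0.
    have := H (k'.1, (b, k'.2)) (y'.1, (b, y'.2)).
    rewrite /EB /= qb mul0r => /(_ erefl); rewrite entWBrho /= eqxx mul1r.
    rewrite -!surjective_pairing => /eqP; rewrite mulf_eq0 => /orP[|/eqP //].
    by move/eqP/(congr1 (@complex.Re R)) => /= /eqP; rewrite (negbTE pb).
  have := proj2 (Hd b).
  rewrite -[rhob b]mul1mx -(unitary_l (Wt_u (rhob b))) -mulmxA W0 mulmx0.
  by move/eqP; rewrite raddf0 eq_sym oner_eq0.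
move=> H k y; rewrite /EB => /eqP; rewrite mulf_eq0 => /orP[/eqP qb|/eqP d0].
  have qb' : q k.2.1 = 0 by move/(congr1 (@complex.Re R)): qb.
  have pb : p k.2.1 = 0.
    by apply/eqP; apply: contraTT isT => /H; rewrite qb' eqxx.
  by rewrite entWBrho pb mul0r mulr0.
rewrite entWBrho (row0 (Hd k.2.1) (k := (k.1, k.2.2))) //.
by rewrite !mulr0.
Qed.

Variable a : R.

Lemma D_val : Dalpha a (rhoABC p rhob) (tensI A (sigmaBC q rhob)) =
  if [forall b, (p b != 0) ==> (q b != 0)]
  then ((a - 1)^-1 * log2 (\sum_b powR (cB p q ((1 - a) / (2 * a)) b) a *
                                 Qs (rhob b) ((1 - a) / (2 * a)) a))%:E
  else +oo%E.
Proof.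
rewrite /Dalpha.
have E : supp_sub (rhoABC p rhob) (tensI A (sigmaBC q rhob)) =
         [forall b, (p b != 0) ==> (q b != 0)].
  apply/idP/forallP.
    by move/supp_big => H b; apply/implyP; exact: H.
  by move=> H; apply/supp_big => b; apply/implyP; exact: H.
rewrite E; case: ifP => // _.
have := MB_pow_tr Hp Hq Hd ((1 - a) / (2 * a)) a; rewrite /SB => ->.
by rewrite (rho_tr Hp Hd) divr1.
Qed.

End Big3.

End Part14.

Section Part15.


Section Real.
Variable R : realType.

Lemma ln_le (u : R) : 0 < u -> ln u <= u - 1.
Proof.
move=> u0; have := expR_ge1Dx (ln u); rewrite lnK ?posrE // => H.
lra.
Qed.

Lemma bern (t a : R) : 0 <= t -> 1 <= a -> 1 + a * (t - 1) <= powR t a.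
Proof.
move=> t0 a1; have [->|tn0] := eqVneq t 0.
  rewrite powR0 ?gt_eqF ?(lt_le_trans ltr01) //; lra.
have tp : 0 < t by rewrite lt_def tn0 t0.
have E : powR t a = t * powR t (a - 1).
  by rewrite -{2}(powRr1 t0) -powRD ?tn0 ?implybT // addrC subrK.
have H1 : t * ln (powR t (a - 1)) <= t * (powR t (a - 1) - 1).
  by rewrite ler_pM2l // ln_le // powR_gt0.
rewrite ln_powR in H1.
have H2 : - ln t <= t^-1 - 1.
  by rewrite -lnV ?posrE // ln_le // invr_gt0.
have H3 : t * (- ln t) <= t * (t^-1 - 1) by rewrite ler_pM2l.
rewrite mulrBr mulfV ?tn0 // in H3.
have H4 : (a - 1) * (t - 1) <= (a - 1) * (t * ln t) by apply: ler_wpM2l; lra.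
rewrite E; move: H1 H3 H4; set L := ln t; set P := powR t (a - 1) => H1 H3 H4.
nra.
Qed.


Lemma powR_split (Z a : R) : 0 < Z -> powR Z a = powR Z (a - 1) * Z.
Proof.
move=> Z0; rewrite -{3}(@powRr1 _ Z (ltW Z0)).
rewrite -powRD ?subrK //; apply/implyP => _; by rewrite gt_eqF.
Qed.

Lemma tangent (y Z a : R) : 0 <= y -> 0 < Z -> 1 <= a ->
  powR Z a + a * powR Z (a - 1) * (y - Z) <= powR y a.
Proof.
move=> y0 Z0 a1; set t := y / Z.
have t0 : 0 <= t by rewrite divr_ge0 // ltW.
have ey : y = t * Z by rewrite /t mulfVK // gt_eqF.
have B := bern t0 a1.
have PZ : 0 < powR Z (a - 1) * Z by rewrite mulr_gt0 // powR_gt0.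
rewrite ey (powRM _ t0 (ltW Z0)) (powR_split a Z0).
move: PZ B; set P := powR Z (a - 1); set T := powR t a => PZ B.
have := ler_pM2r PZ; move=> /(_ (1 + a * (t - 1)) T); rewrite B => H.
nra.
Qed.

Lemma powR_invM (x a : R) : 0 < x -> x * powR x^-1 a = powR x (1 - a).
Proof.
move=> x0; have xn : x != 0 by rewrite gt_eqF.
have E : powR x a * powR x^-1 a = 1.
  by rewrite -(powRM _ (ltW x0)) ?invr_ge0 ?(ltW x0) // mulfV // powR1.
rewrite powRD ?xn ?implybT // (powRr1 (ltW x0)) powRN; congr (_ * _).
apply: (@mulfI _ (powR x a)); first by rewrite gt_eqF // powR_gt0.
by rewrite E mulfV // gt_eqF // powR_gt0.
Qed.

Variable B : finType.
Variables p q Q : B -> R.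
Variable a : R.
Hypothesis a1 : 1 < a.
Hypothesis Hp : prob_dist p.
Hypothesis Qp : forall b, 0 < Q b.

Definition Zs := \sum_b p b * powR (Q b) a^-1.

Lemma Zs_gt0 : 0 < Zs.
Proof.
have : \sum_b p b != 0 by rewrite (proj2 Hp) oner_eq0.
rewrite psumr_neq0; last by move=> b _; exact: (proj1 Hp).
case/hasP => b _ /= pb.
rewrite /Zs (bigD1 b) //= ltr_pwDl ?mulr_gt0 ?powR_gt0 //.
by apply: sumr_ge0 => c _; rewrite mulr_ge0 ?powR_ge0 ?(proj1 Hp).
Qed.

Lemma key : prob_dist q -> (forall b, p b != 0 -> q b != 0) ->
  powR Zs a <= \sum_b powR (p b) a * powR (q b) (1 - a) * Q b.
Proof.
move=> Hq Hpq; have Z0 := Zs_gt0.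
have a0 : a != 0 by rewrite gt_eqF // (lt_trans ltr01).
set P := powR Zs (a - 1).
have per : forall b, powR Zs a * q b + a * P * (p b * powR (Q b) a^-1 - Zs * q b)
                     <= powR (p b) a * powR (q b) (1 - a) * Q b.
  move=> b; have [pb0|pbn] := eqVneq (p b) 0.
    rewrite pb0 powR0 // !mul0r add0r (powR_split a Z0) -/P.
    have q0 := proj1 Hq b; have P0 : 0 <= P by apply: powR_ge0.
    have w0 : 0 <= P * Zs * q b by rewrite !mulr_ge0 // ltW.
    have -> : P * Zs * q b + a * P * - (Zs * q b) = (1 - a) * (P * Zs * q b) by ring.
    by rewrite mulr_le0_ge0 // subr_le0 ltW.
  have pb : 0 < p b by rewrite lt_def pbn (proj1 Hp).
  have qb : 0 < q b by rewrite lt_def Hpq // (proj1 Hq).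
  set x := p b * powR (Q b) a^-1.
  have x0 : 0 <= x by rewrite mulr_ge0 ?powR_ge0 // ltW.
  have := tangent (divr_ge0 x0 (ltW qb)) Z0 (ltW a1); rewrite -/P => T.
  have := ler_pM2l qb; move=> /(_ _ _) E; rewrite -E in T.
  have -> : powR (p b) a * powR (q b) (1 - a) * Q b = q b * powR (x / q b) a.
    rewrite (powRM _ x0) ?invr_ge0 ?(ltW qb) // mulrCA powR_invM // /x.
    rewrite (powRM _ (ltW pb)) ?powR_ge0 //.
    rewrite -powRrM mulVf // (powRr1 (ltW (Qp b))); ring.
  apply: le_trans T.
  have -> : q b * (powR Zs a + a * P * (x / q b - Zs)) =
            powR Zs a * q b + a * P * (x - Zs * q b).
    by field; rewrite gt_eqF.
  exact: le_refl.
apply: le_trans (ler_sum _ (fun b _ => per b)).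
rewrite big_split /= -big_distrr /= (proj2 Hq) mulr1 -big_distrr /= sumrB.
rewrite -big_distrr /= (proj2 Hq) mulr1 -/Zs subrr mulr0 addr0; exact: le_refl.
Qed.

Definition qs b := p b * powR (Q b) a^-1 / Zs.

Lemma qs_prob : prob_dist qs.
Proof.
split.
  by move=> b; rewrite /qs !mulr_ge0 ?powR_ge0 ?(proj1 Hp) // invr_ge0 ltW // Zs_gt0.
by rewrite /qs -big_distrl /= -/Zs mulfV // gt_eqF // Zs_gt0.
Qed.

Lemma qs_supp b : p b != 0 -> qs b != 0.
Proof.
move=> pb; rewrite /qs !mulf_neq0 // ?invr_eq0 ?gt_eqF ?powR_gt0 ?Zs_gt0 //.
Qed.

Lemma powR_inv (x r : R) : 0 < x -> powR x^-1 r = powR x (- r).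
Proof.
move=> x0; rewrite powRN.
have E : powR x r * powR x^-1 r = 1.
  by rewrite -(powRM _ (ltW x0)) ?invr_ge0 ?(ltW x0) // mulfV ?gt_eqF // powR1.
apply: (@mulfI _ (powR x r)); first by rewrite gt_eqF // powR_gt0.
by rewrite E mulfV // gt_eqF // powR_gt0.
Qed.

Lemma term_opt b : powR (p b) a * powR (qs b) (1 - a) * Q b =
  powR Zs (a - 1) * (p b * powR (Q b) a^-1).
Proof.
have a0 : a != 0 by rewrite gt_eqF // (lt_trans ltr01).
have Z0 := Zs_gt0.
have [pb0|pbn] := eqVneq (p b) 0; first by rewrite pb0 powR0 // !mul0r mulr0.
have pb : 0 < p b by rewrite lt_def pbn (proj1 Hp).
have Qb := Qp b.
rewrite /qs (powRM _ _ (ltW _)) ?invr_gt0 //; last by rewrite mulr_ge0 ?powR_ge0 ?ltW.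
rewrite powR_inv // opprB (powRM _ (ltW pb)) ?powR_ge0 // -powRrM.
have E1 : powR (p b) a * powR (p b) (1 - a) = p b.
  by rewrite -powRD ?pbn ?implybT // addrC subrK powRr1 // ltW.
have E2 : powR (Q b) (a^-1 * (1 - a)) * Q b = powR (Q b) a^-1.
  rewrite -{2}(powRr1 (ltW Qb)) -powRD; last by apply/implyP => _; rewrite gt_eqF.
  by congr powR; field.
rewrite mulrA; set X := powR (p b) a in E1 *; set Y := powR (Q b) (a^-1 * (1 - a)) in E2 *.
transitivity (Zs `^ (a - 1) * ((X * p b `^ (1 - a)) * (Y * Q b))); first by ring.
by rewrite E1 E2.
Qed.

Lemma attain : \sum_b powR (p b) a * powR (qs b) (1 - a) * Q b = powR Zs a.
Proof.
under eq_bigr => b _ do rewrite term_opt.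
by rewrite -big_distrr /= -/Zs -powR_split // Zs_gt0.
Qed.

End Real.

End Part15.

Section Part16.


Lemma cB_pow (R : realType) (B : finType) (p q : B -> R) (a : R) b :
  1 < a -> 0 <= p b -> 0 <= q b ->
  powR (cB p q ((1 - a) / (2 * a)) b) a = powR (p b) a * powR (q b) (1 - a).
Proof.
move=> a1 p0 q0; have a0 : a != 0 by rewrite gt_eqF // (lt_trans ltr01).
have a10 : 1 - a != 0 by rewrite subr_eq0 eq_sym gt_eqF.
set s := (1 - a) / (2 * a).
have ss : s + s != 0.
  have -> : s + s = (1 - a) / a by rewrite /s; field.
  by rewrite mulf_neq0 // invr_eq0.
rewrite /cB [_ * p b]mulrC -mulrA -powRD; last by apply/implyP => /eqP E; rewrite E eqxx in ss.
rewrite powRM ?powR_ge0 // -powRrM; congr (_ * powR _ _).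
by rewrite /s; field.
Qed.



End Part16.

Theorem lemma4p2 (R : realType) (A B C : finType) (p : B -> R)
  (rhob : B -> Op R (A * C)%type) (a : R) :
  prob_dist p ->
  (forall b, density (rhob b)) ->
  1 < a ->
  Hpo a p rhob =
  ereal_sup [set (- Dalpha a (rhoABC p rhob) (tensI A (sigmaBC q rhob)))%E
            | q in [set q : B -> R | prob_dist q]]%classic.
Proof.
move=> Hp Hd a1.
have a0 : a != 0 by rewrite gt_eqF // (lt_trans ltr01).
have a10 : (a - 1 != 0) by rewrite subr_eq0 gt_eqF.
have ln2 : (0 < ln (2 : R))%R by rewrite ln_gt0 // ltr1n.
set s := ((1 - a) / (2 * a))%R.
pose Q b := Qs (rhob b) s a.
have Qp : forall b, (0 < Q b)%R := fun b => Qs_gt0 (Hd b) s a.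
pose Z := Zs p Q a.
have Z0 : (0 < Z)%R := Zs_gt0 a Hp Qp.
pose V := (a / (1 - a) * (ln Z / ln 2))%R.
have LHS : Hpo a p rhob = V%:E.
  rewrite /Hpo.
  have E : forall b, ((p b)%:E * pow2e (((1 - a) / a)%:E * Hdown a (rhob b)) =
                     (p b * powR (Q b) a^-1)%:E)%E.
    move=> b; rewrite (Hdown_val a (Hd b)) -/s -/(Q b) -EFinM /pow2e.
    rewrite /powR (gt_eqF (Qp b)); congr (_ * sequences.expR _)%:E%E.
    rewrite /log2; field; rewrite (gt_eqF ln2) a0 a10 //.
  under eq_bigr => b _ do rewrite E.
  rewrite sumEFin /log2e -/Z lne_EFin // -EFinM -EFinM.
have Tval : forall q, prob_dist q ->
  (\sum_b powR (cB p q s b) a * Qs (rhob b) s a =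
   \sum_b powR (p b) a * powR (q b) (1 - a) * Q b)%R.
  move=> q Hq; apply: eq_bigr => b _.
  by rewrite /s cB_pow // ?(proj1 Hp) ?(proj1 Hq).
have ineq : forall T, (powR Z a <= T)%R ->
   (- ((a - 1)^-1 * log2 T) <= V)%R.
  move=> T ZT; have T0 : (0 < T)%R by apply: lt_le_trans ZT; exact: powR_gt0.
  have lnT : (a * ln Z <= ln T)%R.
    by rewrite -ln_powR ler_ln ?posrE ?powR_gt0.
  have -> : V = (- ((a - 1)^-1 * (a * ln Z / ln 2)))%R.
    by rewrite /V; field; rewrite (gt_eqF ln2) a10 subr_eq0 eq_sym gt_eqF.
  rewrite lerN2 /log2 ler_pM2l ?invr_gt0 ?subr_gt0 //.
  by rewrite ler_pM2r ?invr_gt0.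
rewrite LHS; apply/eqP; rewrite eq_le; apply/andP; split.
  apply: ereal_sup_ubound; exists (qs p Q a); first exact: qs_prob.
  rewrite (D_val Hp (qs_prob a Hp Qp) Hd).
  have -> : [forall b, (p b != 0) ==> (qs p Q a b != 0)].
    by apply/forallP => b; apply/implyP => pb; exact: qs_supp.
  rewrite -/s (Tval _ (qs_prob a Hp Qp)) (attain a1 Hp Qp) -/Z.
  rewrite /V /log2 ln_powR; congr (_%:E); field.
  by rewrite (gt_eqF ln2) a10 subr_eq0 eq_sym gt_eqF.
apply: ge_ereal_sup => x [q Hq <-].
rewrite (D_val Hp Hq Hd); case: ifP => H; last exact: leNye.
rewrite -/s Tval // -EFinN lee_fin; apply: ineq; apply: key => //.
by move=> b pb; move/forallP: H => /(_ b) /implyP; apply.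
Qed.
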